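(* Let $A$ be an instance and $K\in\{\mathbb{B},\mathbb{N}\}$. Then $[A]_{\leftrightarrow}$ admits a left query algorithm over $K$ if and only if $\mathrm{CSP}(A)$ admits a left query algorithm over $K$.
   Context: A schema is a finite set of relation symbols, each with a positive arity. An instance $A$ over a schema $\sigma$ assigns to each $R\in\sigma$ of arity $r$ a finite $r$-ary relation $R^A$; $\mathrm{adom}(A)$ is the set of elements occurring in its facts. A homomorphism $h:A\to B$ is a map $h:\mathrm{adom}(A)\to\mathrm{adom}(B)$ preserving every relation; we write $A\to B$ if one exists. $A,B$ are homomorphically equivalent if $A\to B$ and $B\to A$; $[A]_{\leftrightarrow}$ is the class of all instances homomorphically equivalent to $A$. $\mathrm{CSP}(B)=\{A: A\to B\}$. $\hom_{\mathbb{N}}(A,B)$ is the number of homomorphisms $A\to B$; $\hom_{\mathbb{B}}(A,B)=1$ if $A\to B$ and $0$ otherwise. For $\mathcal{F}=\{F_1,\dots,F_k\}$, $\hom_K(\mathcal{F},A)=(\hom_K(F_i,A))_{i\le k}$. A left $k$-query algorithm over $K$ for a class $\mathcal{C}$ (closed under isomorphism) is a pair $(\mathcal{F},X)$ with $|\mathcal{F}|=k$ and $X$ a set of $k$-tuples over $K$ (no effectiveness required) such that for every instance $D$: $D\in\mathcal{C}$ iff $\hom_K(\mathcal{F},D)\in X$; $\mathcal{C}$ admits one if one exists for some $k>0$. *)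

(* Defs.v *)
From mathcomp Require Import all_boot.
Set Implicit Arguments. Unset Strict Implicit. Unset Printing Implicit Defensive.

(* A schema: a finite type of relation symbols [S] with arities [ar]
   (positivity of arities is a hypothesis of the main theorem).
   Instances have elements drawn from [nat]; since every finite instance is
   isomorphic to one over [nat] and all classes considered are closed under
   isomorphism, quantifying over such instances is faithful. *)
Record instance (S : finType) (ar : S -> nat) := Instance {
  rel : forall R : S, seq ((ar R).-tuple nat)
}.
Arguments rel {S ar} i R.

Section Hom.
Variables (S : finType) (ar : S -> nat).
Implicit Types A B D : instance ar.

Definition adom A : seq nat :=
  undup (flatten [seq flatten [seq val t | t <- rel A R] | R <- enum S]).

(* extend a map adom(A) -> adom(B) to nat (values outside adom(A) irrelevant) *)
Definition ext A B (h : {ffun seq_sub (adom A) -> seq_sub (adom B)}) (x : nat) : nat :=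
  if insub x is Some y then val (h y) else 0.

Definition is_hom A B (h : {ffun seq_sub (adom A) -> seq_sub (adom B)}) : bool :=
  [forall R : S, all (fun t => map_tuple (ext h) t \in rel B R) (rel A R)].

Definition homto A B : Prop := exists h, @is_hom A B h.

Definition hom_N A B : nat := #|[set h | @is_hom A B h]|.

Definition hom_B A B : nat := [exists h, @is_hom A B h].

End Hom.

Inductive semiring := KB | KN.

Definition homK (K : semiring) (S : finType) (ar : S -> nat) (A B : instance ar) : nat :=
  match K with KB => hom_B A B | KN => hom_N A B end.

Definition hom_equiv_class (S : finType) (ar : S -> nat) (A : instance ar) : instance ar -> Prop :=
  fun D => homto A D /\ homto D A.

Definition CSP (S : finType) (ar : S -> nat) (A : instance ar) : instance ar -> Prop :=
  fun D => homto D A.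

Definition left_query_algorithm (K : semiring) (S : finType) (ar : S -> nat)
    (C : instance ar -> Prop) (k : nat)
    (F : k.-tuple (instance ar)) (X : k.-tuple nat -> Prop) : Prop :=
  forall D : instance ar, C D <-> X (map_tuple (fun Fi => homK K Fi D) F).

Definition admits_left_query_algorithm (K : semiring) (S : finType) (ar : S -> nat)
    (C : instance ar -> Prop) : Prop :=
  exists k, 0 < k /\ exists F X, @left_query_algorithm K S ar C k F X.

(* Main.v *)
Require Import Defs.
From mathcomp Require Import all_boot.
Set Implicit Arguments. Unset Strict Implicit. Unset Printing Implicit Defensive.

Section Main.
Variables (S : finType) (ar : S -> nat).
Implicit Types A B C D F : instance ar.

Definition homf A B (f : nat -> nat) :=
  forall R, all (fun t => map_tuple f t \in Defs.rel B R) (Defs.rel A R).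

Lemma mem_adomP A x :
  reflect (exists R, exists2 t, t \in Defs.rel A R & x \in val t) (x \in adom A).
Proof.
rewrite /adom mem_undup; apply: (iffP flattenP).
  move=> [s /mapP [R _ ->] /flattenP [s' /mapP [t tin ->] xin]].
  by exists R; exists t.
move=> [R [t tin xin]]; exists (flatten [seq val t | t <- Defs.rel A R]).
  by apply/mapP; exists R; rewrite ?mem_enum.
by apply/flattenP; exists (val t) => //; apply/mapP; exists t.
Qed.

Lemma mem_adom A R t x : t \in Defs.rel A R -> x \in val t -> x \in adom A.
Proof. by move=> tin xin; apply/mem_adomP; exists R; exists t. Qed.

Lemma map_tuple_in n (f g : nat -> nat) (t : n.-tuple nat) :
  {in val t, f =1 g} -> map_tuple f t = map_tuple g t.
Proof. by move=> H; apply: val_inj => /=; apply/eq_in_map. Qed.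

Lemma ext_in A B (h : {ffun seq_sub (adom A) -> seq_sub (adom B)}) x
  (xA : x \in adom A) : ext h x = val (h (SeqSub xA)).
Proof.
rewrite /ext; case: insubP => [u _ uv|]; last by rewrite xA.
by congr (val (h _)); apply: val_inj.
Qed.

Lemma ext_out A B (h : {ffun seq_sub (adom A) -> seq_sub (adom B)}) x :
  x \notin adom A -> ext h x = 0.
Proof. by rewrite /ext; case: insubP => // u ux _ /negP; rewrite ux. Qed.

Lemma homtoP A B : homto A B <-> exists f, homf A B f.
Proof.
split.
  move=> [h /forallP Hh]; exists (ext h) => R; exact: Hh.
move=> [f Hf].
have memB : forall y : seq_sub (adom A), f (val y) \in adom B.
  move=> y; have := ssvalP y => /mem_adomP [R [t tin yin]].
  apply: (mem_adom (R := R) (t := map_tuple f t)); first by have := allP (Hf R) t tin.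
  by rewrite /= map_f.
exists [ffun y => SeqSub (memB y)]; apply/forallP => R.
apply/allP => t tin; rewrite (map_tuple_in (g := f)); first exact: (allP (Hf R)).
move=> x xin; have xA := mem_adom tin xin.
by rewrite (ext_in _ xA) ffunE.
Qed.

Lemma homf_comp A B C f g : homf A B f -> homf B C g -> homf A C (g \o f).
Proof.
move=> Hf Hg R; apply/allP => t tin.
have -> : map_tuple (g \o f) t = map_tuple g (map_tuple f t).
  by apply: val_inj; rewrite /= map_comp.
by apply: (allP (Hg R)); apply: (allP (Hf R)).
Qed.

Lemma homB_N A B : hom_B A B = (0 < hom_N A B).
Proof.
rewrite /hom_B /hom_N; congr nat_of_bool.
apply/existsP/card_gt0P => [[h Hh]|[h]]; first by exists h; rewrite inE.
by rewrite inE => Hh; exists h.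
Qed.

Lemma homN_pos A B : (0 < hom_N A B) <-> homto A B.
Proof.
rewrite /hom_N; split.
  by move/card_gt0P => [h]; rewrite inE => Hh; exists h.
by move=> [h Hh]; apply/card_gt0P; exists h; rewrite inE.
Qed.

Lemma homK_pos K A B : 0 < homK K A B <-> homto A B.
Proof.
case: K => /=; last exact: homN_pos.
by rewrite homB_N lt0b; exact: homN_pos.
Qed.


Definition oenc (x : nat) := x.*2.+1.
Arguments oenc : simpl never.
Definition U A D : instance ar := @Instance S ar (fun R =>
  map (map_tuple double) (Defs.rel D R) ++ map (map_tuple oenc) (Defs.rel A R)).

Lemma half_oenc x : (oenc x)./2 = x.
Proof. by have := half_bit_double x true; rewrite add1n. Qed.
Lemma odd_oenc x : odd (oenc x).
Proof. by rewrite /oenc /= odd_double. Qed.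

Lemma homf_DU A D : homf D (U A D) double.
Proof. by move=> R; apply/allP => t tin; rewrite mem_cat map_f. Qed.

Lemma homf_AU A D : homf A (U A D) oenc.
Proof. by move=> R; apply/allP => t tin; rewrite mem_cat map_f ?orbT. Qed.

Lemma homf_UA A D f : homf D A f ->
  homf (U A D) A (fun x => if odd x then x./2 else f x./2).
Proof.
move=> Hf R; apply/allP => t; rewrite mem_cat => /orP [] /mapP [s sin ->].
  rewrite (_ : map_tuple _ _ = map_tuple f s); first exact: (allP (Hf R)).
  by apply: val_inj; rewrite /= -map_comp; apply: eq_map => y /=; rewrite odd_double doubleK.
rewrite (_ : map_tuple _ _ = s) //.
apply: val_inj; rewrite /= -map_comp (eq_map (g := id)) ?map_id // => y /=.
by rewrite odd_double /= uphalf_double.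
Qed.

Lemma U_class A D : homto D A <-> hom_equiv_class A (U A D).
Proof.
split.
  move=> /homtoP [f Hf]; split; apply/homtoP.
    by exists oenc; apply: homf_AU.
  by exists (fun x => if odd x then x./2 else f x./2); apply: homf_UA.
move=> [_ /homtoP [g Hg]]; apply/homtoP; exists (g \o double).
exact: homf_comp (homf_DU A D) Hg.
Qed.


Definition appf n m (f : {ffun 'I_n.+1 -> 'I_m.+1}) (y : nat) : nat :=
  if y <= n then val (f (inord y)) else 0.

Definition good n m F B (f : {ffun 'I_n.+1 -> 'I_m.+1}) : bool :=
  [forall x : 'I_n.+1, if val x \in adom F then val (f x) \in adom B else val (f x) == 0]
  && [forall R, all (fun t => map_tuple (appf f) t \in Defs.rel B R) (Defs.rel F R)].

Lemma hom_N_good n m F B : (forall y, y \in adom F -> y <= n) ->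
  (forall y, y \in adom B -> y <= m) ->
  hom_N F B = #|[set f : {ffun 'I_n.+1 -> 'I_m.+1} | good F B f]|.
Proof.
move=> bF bB.
have extle : forall (h : {ffun seq_sub (adom F) -> seq_sub (adom B)}) x, ext h x <= m.
  move=> h x; case: (boolP (x \in adom F)) => xF; last by rewrite ext_out.
  by rewrite (ext_in _ xF); apply: bB; exact: ssvalP.
pose phi (h : {ffun seq_sub (adom F) -> seq_sub (adom B)}) :=
  [ffun x : 'I_n.+1 => (inord (ext h (val x)) : 'I_m.+1)].
have phiE : forall h x, val (phi h x) = ext h (val x).
  by move=> h x; rewrite ffunE /= inordK // ltnS.
have appE : forall h y, y \in adom F -> appf (phi h) y = ext h y.
  by move=> h y yF; rewrite /appf bF // phiE /= inordK // ltnS bF.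
have phi_inj : injective phi.
  move=> h1 h2 E; apply/ffunP => y; apply: val_inj.
  have yF := ssvalP y.
  have := congr1 (fun g : {ffun 'I_n.+1 -> 'I_m.+1} => val (g (inord (val y)))) E.
  rewrite /= !phiE /= inordK ?ltnS ?bF //.
  have -> : y = SeqSub yF by apply: val_inj.
  by rewrite !(ext_in _ yF).
rewrite /hom_N -(card_in_imset (f := phi)); last by move=> ? ? _ _; apply: phi_inj.
apply: eq_card => f; rewrite [in RHS]inE; apply/imsetP/idP.
  move=> [h]; rewrite inE => /forallP Hh ->; apply/andP; split.
    apply/forallP => x; rewrite phiE.
    case: ifP => xF; first by rewrite (ext_in _ xF); exact: ssvalP.
    by rewrite ext_out ?xF.
  apply/forallP => R; apply/allP => t tin.
  rewrite (map_tuple_in (g := ext h)); first exact: (allP (Hh R)).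
  by move=> y yin; apply: appE; exact: mem_adom tin yin.
move=> /andP [/forallP G1 /forallP G2].
have memB : forall y : seq_sub (adom F), val (f (inord (val y))) \in adom B.
  move=> y; have := G1 (inord (val y)); rewrite /= inordK ?ltnS ?bF ?ssvalP //.
have extE : forall x, x \in adom F -> ext [ffun y => SeqSub (memB y)] x = appf f x.
  by move=> x xF; rewrite (ext_in _ xF) ffunE /= /appf bF.
exists [ffun y => SeqSub (memB y)].
  rewrite inE; apply/forallP => R; apply/allP => t tin.
  rewrite (map_tuple_in (g := appf f)); first exact: (allP (G2 R)).
  by move=> y yin; apply: extE; exact: mem_adom tin yin.
apply/ffunP => x; apply: val_inj; rewrite phiE.
have := G1 x; case: ifP => xF.
  by rewrite extE // /appf -ltnS ltn_ord inord_val.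
by rewrite ext_out ?xF // => /eqP ->.
Qed.


Lemma inordE n k : k <= n -> val (inord k : 'I_n.+1) = k.
Proof. by move=> h; rewrite /= inordK. Qed.

Lemma relU_cases A D R g (t : (ar R).-tuple nat) :
  map_tuple g t \in Defs.rel (U A D) R ->
  (forall y, y \in val t -> ~~ odd (g y)) \/ (forall y, y \in val t -> odd (g y)).
Proof.
rewrite mem_cat => /orP [] /mapP [s _ /(congr1 val) /= E]; [left|right] => y yt.
  have : g y \in map double s by rewrite -E map_f.
  by move=> /mapP [w _ ->]; rewrite odd_double.
have : g y \in map oenc s by rewrite -E map_f.
by move=> /mapP [w _ ->]; exact: odd_oenc.
Qed.

Lemma relU_D (ar_pos : forall R, 0 < ar R) A D R g (t : (ar R).-tuple nat) :
  map_tuple g t \in Defs.rel (U A D) R -> (forall y, y \in val t -> ~~ odd (g y)) ->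
  map_tuple (fun y => (g y)./2) t \in Defs.rel D R.
Proof.
move=> + ev; rewrite mem_cat => /orP [] /mapP [s sin E].
  rewrite (_ : map_tuple _ t = s) //; apply: val_inj.
  have /= E' := congr1 val E.
  by rewrite /= (map_comp half g) E' -map_comp (eq_map (g := id)) ?map_id // => w /=; rewrite doubleK.
exfalso; have y0 := mem_tnth (Ordinal (ar_pos R)) t.
have := ev _ y0; have /= E' := congr1 val E.
have : g (tnth t (Ordinal (ar_pos R))) \in map oenc s by rewrite -E' map_f.
by move=> /mapP [w _ ->]; rewrite odd_oenc.
Qed.

Lemma relU_A (ar_pos : forall R, 0 < ar R) A D R g (t : (ar R).-tuple nat) :
  map_tuple g t \in Defs.rel (U A D) R -> (forall y, y \in val t -> odd (g y)) ->
  map_tuple (fun y => (g y)./2) t \in Defs.rel A R.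
Proof.
move=> + ev; rewrite mem_cat => /orP [] /mapP [s sin E]; last first.
  rewrite (_ : map_tuple _ t = s) //; apply: val_inj.
  have /= E' := congr1 val E.
  rewrite /= (map_comp half g) E' -map_comp (eq_map (g := id)) ?map_id // => w /=; exact: uphalf_double.
exfalso; have y0 := mem_tnth (Ordinal (ar_pos R)) t.
have := ev _ y0; have /= E' := congr1 val E.
have : g (tnth t (Ordinal (ar_pos R))) \in map double s by rewrite -E' map_f.
by move=> /mapP [w _ ->]; rewrite odd_double.
Qed.

Lemma adom_U A D z : z \in adom (U A D) ->
  if odd z then z./2 \in adom A else z./2 \in adom D.
Proof.
move=> /mem_adomP [R [t]]; rewrite mem_cat => /orP [] /mapP [s sin ->] /=.
  by move=> /mapP [w win ->]; rewrite odd_double doubleK; exact: mem_adom sin win.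
by move=> /mapP [w win ->]; rewrite odd_oenc half_oenc; exact: mem_adom sin win.
Qed.

Lemma adom_UD A D d : d \in adom D -> d.*2 \in adom (U A D).
Proof.
move=> /mem_adomP [R [t tin dt]]; apply: (mem_adom (R := R) (t := map_tuple double t)).
  by rewrite mem_cat map_f.
by rewrite /= map_f.
Qed.

Lemma adom_UA A D d : d \in adom A -> oenc d \in adom (U A D).
Proof.
move=> /mem_adomP [R [t tin dt]]; apply: (mem_adom (R := R) (t := map_tuple oenc t)).
  by rewrite mem_cat map_f ?orbT.
by rewrite /= map_f.
Qed.

Definition subi F (q : pred nat) : instance ar := @Instance S ar (fun R =>
  filter (fun t : (ar R).-tuple nat => all q (val t)) (Defs.rel F R)).

Lemma adom_subi F q y : y \in adom (subi F q) -> y \in adom F /\ q y.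
Proof.
move=> /mem_adomP [R [t]]; rewrite mem_filter => /andP [/allP qt tin] yt.
by split; [exact: mem_adom tin yt | exact: qt].
Qed.

Lemma adom_subi2 F q y :
  (forall R, all (fun t : (ar R).-tuple nat => all q (val t) || all (predC q) (val t)) (Defs.rel F R)) ->
  y \in adom F -> q y -> y \in adom (subi F q).
Proof.
move=> cb /mem_adomP [R [t tin yt]] qy; apply: (mem_adom (R := R) (t := t)) => //.
rewrite mem_filter tin andbT.
have := allP (cb R) t tin => /orP [] // /allP /(_ y yt) /=.
by rewrite qy.
Qed.


Lemma half_le k m : k <= m -> k./2 <= m.
Proof. by move=> h; rewrite leq_half_double (leq_trans h) // -addnn -addnS leq_addr. Qed.

Definition pset n (P : {set 'I_n.+1}) : pred nat :=
  fun y => (y <= n) && ((inord y : 'I_n.+1) \in P).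

Definition closedb n F (P : {set 'I_n.+1}) : bool :=
  [forall x in P, val x \in adom F] &&
  [forall R, all (fun t : (ar R).-tuple nat =>
     all (pset P) (val t) || all (predC (pset P)) (val t)) (Defs.rel F R)].

Definition side n m F (f : {ffun 'I_n.+1 -> 'I_m.+1}) : {set 'I_n.+1} :=
  [set x | (val x \in adom F) && ~~ odd (f x)].

Lemma fib_card (ar_pos : forall R, 0 < ar R) n m A D F (P : {set 'I_n.+1}) :
  (forall y, y \in adom F -> y <= n) ->
  (forall y, y \in adom D -> y.*2.+1 <= m) ->
  (forall y, y \in adom A -> y.*2.+1 <= m) ->
  #|[set f : {ffun 'I_n.+1 -> 'I_m.+1} | good F (U A D) f & side F f == P]| =
  closedb F P * (#|[set f : {ffun 'I_n.+1 -> 'I_m.+1} | good (subi F (pset P)) D f]| *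
                 #|[set f : {ffun 'I_n.+1 -> 'I_m.+1} | good (subi F (predC (pset P))) A f]|).
Proof.
move=> bF bD bA.
have psetE : forall x : 'I_n.+1, pset P (val x) = (x \in P).
  by move=> x; rewrite /pset -ltnS ltn_ord inord_val.
have appfE : forall k (f : {ffun 'I_n.+1 -> 'I_k.+1}) y, y \in adom F ->
    appf f y = val (f (inord y)).
  by move=> k f y yF; rewrite /appf bF.
case: (boolP (closedb F P)) => cP; last first.
  rewrite mul0n; apply/eqP; rewrite cards_eq0; apply/eqP/setP => f; rewrite !inE.
  apply/negP => /andP [/andP [/forallP G1 /forallP G2] /eqP sf]; apply: (negP cP).
  apply/andP; split.
    by apply/forallP => x; apply/implyP; rewrite -sf inE => /andP [].
  apply/forallP => R; apply/allP => t tin.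
  have yF : forall y, y \in val t -> y \in adom F by move=> y; exact: mem_adom tin.
  have sy : forall y, y \in val t -> pset P y = ~~ odd (appf f y).
    move=> y yt; rewrite /pset bF ?yF // -sf inE /= inordK ?ltnS ?bF ?yF //.
    by rewrite appfE ?yF.
  case: (relU_cases (allP (G2 R) t tin)) => H; apply/orP; [left|right];
    apply/allP => y yt /=; by rewrite sy // H.

rewrite mul1n -cardsX.
move: cP => /andP [/forallP c1 /forallP c2].
set p := pset P.
have cb : forall R, all (fun t : (ar R).-tuple nat => all p (val t) || all (predC p) (val t))
    (Defs.rel F R).
  by move=> R; exact: c2.
have cb' : forall R, all (fun t : (ar R).-tuple nat =>
    all (predC p) (val t) || all (predC (predC p)) (val t)) (Defs.rel F R).
  move=> R; apply/allP => t tin; have := allP (cb R) t tin; rewrite orbC.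
  by rewrite (@eq_all _ (predC (predC p)) p) // => y /=; rewrite negbK.
have VPE : forall y, (y \in adom (subi F p)) = (y \in adom F) && p y.
  move=> y; apply/idP/andP => [/adom_subi [yF qy]|[]]; [by split | exact: adom_subi2].
have VQE : forall y, (y \in adom (subi F (predC p))) = (y \in adom F) && ~~ p y.
  move=> y; apply/idP/andP => [/adom_subi [yF qy]|[]]; [by split | exact: adom_subi2].
set VP := adom (subi F p) in VPE *.
set VQ := adom (subi F (predC p)) in VQE *.
have pE : forall x : 'I_n.+1, p (val x) = (x \in P) by exact: psetE.
pose phi (f : {ffun 'I_n.+1 -> 'I_m.+1}) :=
  ([ffun x : 'I_n.+1 => (inord (if val x \in VP then (val (f x))./2 else 0) : 'I_m.+1)],
   [ffun x : 'I_n.+1 => (inord (if val x \in VQ then (val (f x))./2 else 0) : 'I_m.+1)]).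
pose psi (g : {ffun 'I_n.+1 -> 'I_m.+1} * {ffun 'I_n.+1 -> 'I_m.+1}) :=
  [ffun x : 'I_n.+1 => (inord (if val x \in VP then (val (g.1 x)).*2
      else if val x \in VQ then oenc (val (g.2 x)) else 0) : 'I_m.+1)].
have phi1E : forall f x, val ((phi f).1 x) = if val x \in VP then (val (f x))./2 else 0.
  move=> f x; rewrite ffunE /= inordK // ltnS; case: ifP => // _.
  by apply: half_le; rewrite -ltnS.
have phi2E : forall f x, val ((phi f).2 x) = if val x \in VQ then (val (f x))./2 else 0.
  move=> f x; rewrite ffunE /= inordK // ltnS; case: ifP => // _.
  by apply: half_le; rewrite -ltnS.
have VPF : forall y, y \in VP -> y \in adom F by move=> y; rewrite VPE => /andP [].
have VQF : forall y, y \in VQ -> y \in adom F by move=> y; rewrite VQE => /andP [].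
have VPQ : forall y, y \in VP -> y \in VQ = false.
  by move=> y; rewrite VPE VQE => /andP [-> ->].
have VPQF : forall y, y \in adom F -> (y \in VP) || (y \in VQ).
  by move=> y yF; rewrite VPE VQE yF /=; case: (p y).
have psiE : forall g, g.1 \in [set f | good (subi F p) D f] -> g.2 \in [set f | good (subi F (predC p)) A f] ->
  forall x, val (psi g x) = if val x \in VP then (val (g.1 x)).*2
      else if val x \in VQ then oenc (val (g.2 x)) else 0.
  move=> g; rewrite !inE => /andP [/forallP H1 _] /andP [/forallP H2 _] x.
  rewrite ffunE /= inordK // ltnS.
  case: ifP => xP; first by have := H1 x; rewrite xP => /bD; apply: leq_trans.
  case: ifP => xQ //; by have := H2 x; rewrite xQ => /bA.
have sideE : forall f : {ffun 'I_n.+1 -> 'I_m.+1}, side F f = P -> forall x, val x \in adom F -> (x \in P) = ~~ odd (f x).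
  by move=> f sf x xF; rewrite -sf inE xF.
have psiphi : forall f, f \in [set f | good F (U A D) f & side F f == P] -> psi (phi f) = f.
  move=> f; rewrite inE => /andP [/andP [/forallP G1f _] /eqP sf].
  apply/ffunP => x; rewrite ffunE.
  rewrite [X in inord X](_ : _ = val (f x)) ?inord_val //.
  rewrite phi1E phi2E; case: ifP => xP.
    have xF := VPF _ xP; move: xP; rewrite VPE xF /= pE (sideE f sf x xF) => ev.
    by rewrite ev even_halfK.
  case: ifP => xQ.
    have xF := VQF _ xQ; move: xQ; rewrite VQE xF /= pE (sideE f sf x xF) negbK => od.
    by rewrite od /oenc; have := odd_double_half (val (f x)); rewrite od add1n.
  have xF : val x \notin adom F by apply/negP => /VPQF; rewrite xP xQ.
  by have := G1f x; rewrite (negbTE xF) => /eqP.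
have vin : forall y, y \in adom F -> val (inord y : 'I_n.+1) = y.
  by move=> y yF; rewrite /= inordK // ltnS bF.
have phiG : forall f, f \in [set f | good F (U A D) f & side F f == P] ->
  phi f \in setX [set f | good (subi F p) D f] [set f | good (subi F (predC p)) A f].
  move=> f; rewrite inE => /andP [/andP [/forallP G1f /forallP G2f] /eqP sf].
  apply/setXP; rewrite !inE; split; apply/andP; split.
  - apply/forallP => x; rewrite -/VP phi1E; case: ifP => xP; last by rewrite ifF.
    have xF := VPF _ xP.
    have ev : ~~ odd (f x) by rewrite -(sideE f sf x xF) -pE; move: xP; rewrite VPE => /andP [].
    by have := G1f x; rewrite xF => /adom_U /=; rewrite (negbTE ev) ifT.
  - apply/forallP => R; apply/allP => t; rewrite mem_filter => /andP [pt tin].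
    have yP : forall y, y \in val t -> y \in VP.
      move=> y yt; rewrite VPE (mem_adom tin yt) /=; exact: (allP pt).
    rewrite (map_tuple_in (g := fun y => (appf f y)./2)).
      apply: relU_D => //; first exact: (allP (G2f R)).
      move=> y yt; have yF := VPF _ (yP y yt).
      rewrite appfE // -(sideE f sf) ?vin // -pE vin //; exact: (allP pt y yt).
    move=> y yt; have yF := VPF _ (yP y yt).
    by rewrite !appfE // phi1E vin // yP.
  - apply/forallP => x; rewrite -/VQ phi2E; case: ifP => xQ; last by rewrite ifF.
    have xF := VQF _ xQ.
    have od : odd (f x).
      by rewrite -[odd _]negbK -(sideE f sf x xF) -pE; move: xQ; rewrite VQE => /andP [].
    by have := G1f x; rewrite xF => /adom_U /=; rewrite od ifT.
  - apply/forallP => R; apply/allP => t; rewrite mem_filter => /andP [pt tin].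
    have yQ : forall y, y \in val t -> y \in VQ.
      move=> y yt; rewrite VQE (mem_adom tin yt) /=; exact: (allP pt).
    rewrite (map_tuple_in (g := fun y => (appf f y)./2)).
      apply: relU_A => //; first exact: (allP (G2f R)).
      move=> y yt; have yF := VQF _ (yQ y yt).
      rewrite appfE // -[odd _]negbK -(sideE f sf) ?vin // -pE vin //; exact: (allP pt y yt).
    move=> y yt; have yF := VQF _ (yQ y yt).
    by rewrite !appfE // phi2E vin // yQ.
have psiF : forall g, g \in setX [set f | good (subi F p) D f] [set f | good (subi F (predC p)) A f] ->
    psi g \in [set f | good F (U A D) f & side F f == P] /\ phi (psi g) = g.
  case=> g1 g2 /setXP [g1G g2G].
  have E := psiE (g1, g2) g1G g2G.
  move: (g1G) (g2G); rewrite !inE => /andP [/forallP H1 /forallP H2] /andP [/forallP K1 /forallP K2].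
  have nPQ : forall y, y \in VQ -> (y \in VP) = false.
    by move=> y yQ; apply/negP => /VPQ; rewrite yQ.
  split.
    apply/andP; split; first (rewrite /good; apply/andP; split).
    + apply/forallP => x; rewrite E /=.
      case: ifP => xF.
        case/orP: (VPQF _ xF) => [xP|xQ].
          by rewrite xP; have := H1 x; rewrite xP => /adom_UD.
        by rewrite nPQ // xQ; have := K1 x; rewrite xQ => /adom_UA.
      have xP : (val x \in VP) = false by apply/negP => /VPF; rewrite xF.
      have xQ : (val x \in VQ) = false by apply/negP => /VQF; rewrite xF.
      by rewrite xP xQ.
    + apply/forallP => R; apply/allP => t tin.
      case/orP: (allP (cb R) t tin) => pt.
        have tin' : t \in Defs.rel (subi F p) R by rewrite mem_filter pt.
        have yP : forall y, y \in val t -> y \in VP := fun y yt => mem_adom tin' yt.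
        rewrite (map_tuple_in (g := fun y => double (appf g1 y))).
          rewrite (_ : map_tuple _ t = map_tuple double (map_tuple (appf g1) t)); last first.
            by apply: val_inj; rewrite /= -map_comp.
          apply: (allP (homf_DU A D R)); exact: (allP (H2 R)).
        move=> y yt; have yF := VPF _ (yP y yt); by rewrite !appfE // E vin // (yP y yt).
      have tin' : t \in Defs.rel (subi F (predC p)) R by rewrite mem_filter pt.
      have yQ : forall y, y \in val t -> y \in VQ := fun y yt => mem_adom tin' yt.
      rewrite (map_tuple_in (g := fun y => oenc (appf g2 y))).
        rewrite (_ : map_tuple _ t = map_tuple oenc (map_tuple (appf g2) t)); last first.
          by apply: val_inj; rewrite /= -map_comp.
        apply: (allP (homf_AU A D R)); exact: (allP (K2 R)).
      move=> y yt; have yF := VQF _ (yQ y yt); by rewrite !appfE // E vin // nPQ ?(yQ y yt).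
    + apply/eqP/setP => x; rewrite inE E.
      case: (boolP (x \in P)) => xinP.
        have xF := implyP (c1 x) xinP.
        have xP : val x \in VP by rewrite VPE xF pE.
        by rewrite xF xP /= odd_double.
      case: (boolP (val x \in adom F)) => xF //=.
      have xQ : val x \in VQ by rewrite VQE xF pE xinP.
      by rewrite nPQ // xQ odd_oenc.
  have e1 : (phi (psi (g1, g2))).1 = g1.
    apply/ffunP => x; apply: val_inj; rewrite phi1E E.
    case: ifP => xP; first by rewrite ifT //= doubleK.
    by have := H1 x; rewrite xP => /eqP.
  have e2 : (phi (psi (g1, g2))).2 = g2.
    apply/ffunP => x; apply: val_inj; rewrite phi2E E.
    case: ifP => xQ; first by have xP := nPQ _ xQ; rewrite ifF // ifT //= uphalf_double.
    by have := K1 x; rewrite xQ => /eqP.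
  by case: (phi (psi (g1, g2))) e1 e2 => a b /= -> ->.
rewrite -(card_in_imset (f := phi) (D := [set f | good F (U A D) f & side F f == P])).
  apply: eq_card => g; apply/imsetP/idP => [[f fF ->]|gX]; first exact: phiG.
  by have [? ?] := psiF g gX; exists (psi g).
by move=> f1 f2 F1 F2 E; rewrite -(psiphi f1 F1) E psiphi.
Qed.


Lemma le_dbl y m : y.*2.+1 <= m -> y <= m.
Proof. by move=> h; apply: leq_trans h; rewrite -addnn (leq_trans (leq_addr y y)) ?leqnSn. Qed.

Lemma homN_U (ar_pos : forall R, 0 < ar R) n m A D F :
  (forall y, y \in adom F -> y <= n) ->
  (forall y, y \in adom D -> y.*2.+1 <= m) ->
  (forall y, y \in adom A -> y.*2.+1 <= m) ->
  hom_N F (U A D) = \sum_(P : {set 'I_n.+1})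
    closedb F P * (hom_N (subi F (pset P)) D * hom_N (subi F (predC (pset P))) A).
Proof.
move=> bF bD bA.
have bU : forall y, y \in adom (U A D) -> y <= m.
  move=> y /adom_U; move: (odd_double_half y); move: (y./2) => h.
  case: (odd y) => /= <-.
    by rewrite add1n => /bA.
  by rewrite add0n => /bD /ltnW.
rewrite (hom_N_good (n := n) (m := m)) //.
rewrite -sum1_card (partition_big (side F) xpredT) //=.
apply: eq_bigr => P _.
rewrite (hom_N_good (n := n) (m := m) (F := subi F _) (B := D)); first last.
- by move=> y yD; apply: le_dbl; exact: bD.
- by move=> y /adom_subi [yF _]; exact: bF.
rewrite (hom_N_good (n := n) (m := m) (F := subi F _) (B := A)); first last.
- by move=> y yD; apply: le_dbl; exact: bA.
- by move=> y /adom_subi [yF _]; exact: bF.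
rewrite -fib_card // -sum1_card; apply: eq_bigl => f; by rewrite !inE.
Qed.


Lemma sum_pos_eq (I : finType) (g g' : I -> nat) :
  (forall i, (0 < g i) = (0 < g' i)) -> (0 < \sum_i g i) = (0 < \sum_i g' i).
Proof.
move=> H; rewrite !lt0n !sum_nat_eq0; congr negb; apply: eq_forallb => i.
by move: (H i); rewrite !lt0n; case: (g i == 0); case: (g' i == 0).
Qed.

Definition bnd (X : instance ar) := \max_(y <- adom X) y.

Lemma bnd_le X y : y \in adom X -> y <= bnd X.
Proof. by move=> yX; rewrite /bnd (leq_bigmax_seq (F := id) _ yX). Qed.

Lemma exists_m A D : exists m, (forall y, y \in adom D -> y.*2.+1 <= m) /\
  (forall y, y \in adom A -> y.*2.+1 <= m).
Proof.
exists (bnd D + bnd A).*2.+1; split => y /bnd_le h; rewrite ltnS leq_double.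
  by rewrite (leq_trans h) ?leq_addr.
by rewrite (leq_trans h) ?leq_addl.
Qed.

Lemma homK_U_det (ar_pos : forall R, 0 < ar R) K n A D D' F :
  (forall y, y \in adom F -> y <= n) ->
  (forall P : {set 'I_n.+1}, homK K (subi F (pset P)) D = homK K (subi F (pset P)) D') ->
  homK K F (U A D) = homK K F (U A D').
Proof.
move=> bF H.
have [m [bD bA]] := exists_m A D.
have [m' [bD' bA']] := exists_m A D'.
case: K H => /= H.
  rewrite !homB_N (homN_U ar_pos bF bD bA) (homN_U ar_pos bF bD' bA').
  congr nat_of_bool; apply: sum_pos_eq => P; rewrite !muln_gt0.
  by move: (H P); rewrite !homB_N; case: (0 < _); case: (0 < _).
rewrite (homN_U ar_pos bF bD bA) (homN_U ar_pos bF bD' bA').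
by apply: eq_bigr => P _; rewrite H.
Qed.

End Main.

Unset Implicit Arguments.

Theorem mainTheorem6 (S : finType) (ar : S -> nat)
    (ar_pos : forall R : S, 0 < ar R)
    (A : instance ar) (K : semiring) :
  admits_left_query_algorithm K (hom_equiv_class A) <->
  admits_left_query_algorithm K (CSP A).
Proof.
split.
  move=> [k [k0 [F [X alg]]]].
  pose n := \max_(i < k) bnd (tnth F i).
  have bF : forall i : 'I_k, forall y, y \in adom (tnth F i) -> y <= n.
    move=> i y /bnd_le h; apply: (leq_trans h).
    exact: (leq_bigmax (F := fun i => bnd (tnth F i)) i).
  pose g (iP : 'I_k * {set 'I_n.+1}) := subi (tnth F iP.1) (pset iP.2).
  pose Gs := map g (enum {: 'I_k * {set 'I_n.+1}}).
  exists (size Gs); split.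
    rewrite size_map -cardE card_prod card_ord muln_gt0 k0 /=.
    by apply/card_gt0P; exists set0.
  exists (in_tuple Gs).
  exists (fun v => exists D, v = map_tuple (fun Gi => homK K Gi D) (in_tuple Gs) /\ homto D A).
  move=> D; split; first by move=> HD; exists D.
  move=> [D' [E HD']].
  have E1 := congr1 val E; rewrite /= /Gs -!map_comp in E1.
  have EG : forall i P, homK K (g (i, P)) D = homK K (g (i, P)) D'.
    by move=> i P; have := (proj2 (eq_in_map _ _ _) E1) (i, P); rewrite -enumT mem_enum => /(_ isT).
  have EF : map_tuple (fun Fi => homK K Fi (U A D)) F = map_tuple (fun Fi => homK K Fi (U A D')) F.
    apply: eq_from_tnth => i; rewrite !tnth_map.
    by apply: homK_U_det => //; [exact: bF | move=> P; exact: EG i P].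
  apply/(U_class A D); apply/alg; rewrite EF; apply/alg.
  exact: (proj1 (U_class A D') HD').
move=> [k [k0 [F [X alg]]]].
exists k.+1; split => //.
exists (cons_tuple A F).
exists (fun v => exists D, v = map_tuple (fun Gi => homK K Gi D) (cons_tuple A F) /\ hom_equiv_class A D).
move=> D; split; first by move=> HD; exists D.
move=> [D' [E [h1 h2]]].
have /= [e1 e2] := congr1 val E.
split.
  by apply/(homK_pos K); rewrite e1; apply/(homK_pos K).
apply/alg.
have -> : map_tuple (fun Fi => homK K Fi D) F = map_tuple (fun Fi => homK K Fi D') F.
  by apply: val_inj.
exact/alg.
Qed.
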